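(* Let $M_{\mathrm{B_{ii}}}$ be the monoid with generators $a,b,c$ and relations $cbb=bba$, $bc=ab$, $ac=ca$. Then $M_{\mathrm{B_{ii}}}$ satisfies the cancellation condition: for $A,B,X,Y\in M_{\mathrm{B_{ii}}}$, $AXB=AYB$ implies $X=Y$.
   Context: A monoid given by generators and relations is the quotient of the free monoid on the generators by the congruence generated by the relations. *)

(* Defs.v *)
From Stdlib Require Import List.
Import ListNotations.

Inductive gen : Type := ga | gb | gc.

Definition word := list gen.

Inductive rel_Bii : word -> word -> Prop :=
  | rel1 : rel_Bii [gc; gb; gb] [gb; gb; ga]
  | rel2 : rel_Bii [gb; gc] [ga; gb]
  | rel3 : rel_Bii [ga; gc] [gc; ga].

Inductive cong_gen (R : word -> word -> Prop) : word -> word -> Prop :=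
  | cg_base : forall u v, R u v -> cong_gen R u v
  | cg_refl : forall u, cong_gen R u u
  | cg_sym : forall u v, cong_gen R u v -> cong_gen R v u
  | cg_trans : forall u v w, cong_gen R u v -> cong_gen R v w -> cong_gen R u w
  | cg_mul : forall u u' v v', cong_gen R u u' -> cong_gen R v v' ->
      cong_gen R (u ++ v) (u' ++ v').

Definition eqM (u v : word) : Prop := cong_gen rel_Bii u v.

(* Main.v *)
Require Import Defs.
From Stdlib Require Import List Lia Arith.
Import ListNotations.

Definition vec := (nat * nat * nat)%type.
Definition rot (v : vec) : vec := let '(x,y,z) := v in (y,z,x).
Definition sh (k : nat) (v : vec) : vec := Nat.iter k rot v.
Definition vadd (u v : vec) : vec :=
  let '(x,y,z) := u in let '(x',y',z') := v in (x+x', y+y', z+z').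
Definition mul (g h : nat * vec) : nat * vec :=
  let '(m1,v1) := g in let '(m2,v2) := h in (m1+m2, vadd (sh m2 v1) v2).
Definition gphi (l : gen) : nat * vec :=
  match l with ga => (0,(0,1,0)) | gb => (1,(0,0,0)) | gc => (0,(1,0,0)) end.
Fixpoint phi (w : word) : nat * vec :=
  match w with [] => (0,(0,0,0)) | l :: w' => mul (gphi l) (phi w') end.

Lemma sh_add k u v : sh k (vadd u v) = vadd (sh k u) (sh k v).
Proof.
  induction k; simpl; auto. unfold sh in *. simpl. rewrite IHk.
  destruct (Nat.iter k rot u) as [[? ?] ?]; destruct (Nat.iter k rot v) as [[? ?] ?]; reflexivity.
Qed.
Lemma sh_comp m n v : sh (m + n) v = sh n (sh m v).
Proof. unfold sh. rewrite Nat.add_comm. apply Nat.iter_add. Qed.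
Lemma sh_zero k : sh k (0,0,0) = (0,0,0).
Proof. induction k; simpl; auto. unfold sh in *; simpl; rewrite IHk; reflexivity. Qed.
Lemma sh_inj k u v : sh k u = sh k v -> u = v.
Proof.
  induction k; simpl; auto. intro H. apply IHk. unfold sh in *. simpl in H.
  destruct (Nat.iter k rot u) as [[? ?] ?]; destruct (Nat.iter k rot v) as [[? ?] ?].
  simpl in H. injection H; intros; subst; reflexivity.
Qed.
Lemma vadd_assoc u v w : vadd (vadd u v) w = vadd u (vadd v w).
Proof. destruct u as [[? ?] ?]; destruct v as [[? ?] ?]; destruct w as [[? ?] ?]; simpl; f_equal; [f_equal|]; lia. Qed.
Lemma vadd_0l v : vadd (0,0,0) v = v.
Proof. destruct v as [[? ?] ?]; reflexivity. Qed.
Lemma vadd_0r v : vadd v (0,0,0) = v.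
Proof. destruct v as [[? ?] ?]; simpl; f_equal; [f_equal|]; lia. Qed.
Lemma vadd_cancel_l u v w : vadd u v = vadd u w -> v = w.
Proof. destruct u as [[? ?] ?]; destruct v as [[? ?] ?]; destruct w as [[? ?] ?]; simpl;
  intro H; injection H; intros; f_equal; [f_equal|]; lia. Qed.
Lemma vadd_cancel_r u v w : vadd v u = vadd w u -> v = w.
Proof. destruct u as [[? ?] ?]; destruct v as [[? ?] ?]; destruct w as [[? ?] ?]; simpl;
  intro H; injection H; intros; f_equal; [f_equal|]; lia. Qed.

Lemma mul_assoc g h k : mul (mul g h) k = mul g (mul h k).
Proof.
  destruct g as [m1 v1], h as [m2 v2], k as [m3 v3]; simpl.
  f_equal; [lia|]. rewrite sh_add, vadd_assoc, sh_comp. reflexivity.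
Qed.
Lemma mul_e_l g : mul (0,(0,0,0)) g = g.
Proof. destruct g as [m v]; simpl. rewrite sh_zero, vadd_0l. reflexivity. Qed.
Lemma mul_e_r g : mul g (0,(0,0,0)) = g.
Proof. destruct g as [m v]; simpl. rewrite vadd_0r, Nat.add_0_r. reflexivity. Qed.

Lemma phi_app u v : phi (u ++ v) = mul (phi u) (phi v).
Proof. induction u; cbn [app phi]. rewrite mul_e_l; auto. rewrite IHu, mul_assoc; auto. Qed.

Lemma phi_inv u v : eqM u v -> phi u = phi v.
Proof.
  induction 1; auto; try congruence.
  - destruct H; reflexivity.
  - rewrite !phi_app; congruence.
Qed.

Lemma mul_cancel_l g h1 h2 : mul g h1 = mul g h2 -> h1 = h2.
Proof.
  destruct g as [m v], h1 as [m1 v1], h2 as [m2 v2]; simpl; intro H.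
  injection H; intros H1 H2. assert (m1 = m2) by lia. subst.
  f_equal. eapply vadd_cancel_l; eauto.
Qed.
Lemma mul_cancel_r g h1 h2 : mul h1 g = mul h2 g -> h1 = h2.
Proof.
  destruct g as [m v], h1 as [m1 v1], h2 as [m2 v2]; simpl; intro H.
  injection H; intros H1 H2. assert (m1 = m2) by lia. subst.
  f_equal. eapply sh_inj. eapply vadd_cancel_r; eauto.
Qed.

Lemma eq_trans u v w : eqM u v -> eqM v w -> eqM u w.
Proof. apply cg_trans. Qed.
Lemma eq_refl' u : eqM u u.
Proof. apply cg_refl. Qed.
Lemma stp u v : eqM u v -> forall p s x, x = p ++ u ++ s -> eqM x (p ++ v ++ s).
Proof. intros H p s x ->. apply cg_mul. apply cg_refl. apply cg_mul; auto. apply cg_refl. Qed.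

Lemma stp2 u v : eqM u v -> forall p s x y, x = p ++ u ++ s -> y = p ++ v ++ s -> eqM x y.
Proof. intros H p s x y -> ->. apply (stp _ _ H p s); reflexivity. Qed.

Ltac lsolve := repeat progress (simpl; rewrite ?app_nil_r, <- ?app_assoc); reflexivity.
Ltac fin H P S := apply (stp2 _ _ H P S); lsolve.
Ltac st H P S := eapply eq_trans; [apply (stp _ _ H P S); lsolve |].

Notation A n := (repeat ga n).
Notation B n := (repeat gb n).
Notation C n := (repeat gc n).

Lemma rep_comm (t : gen) n l : repeat t n ++ t :: l = t :: repeat t n ++ l.
Proof. induction n; simpl; auto. rewrite IHn; auto. Qed.

Lemma L1 q : eqM (A q ++ [gb]) (gb :: C q).
Proof.
  induction q; simpl. apply cg_refl.
  st IHq [ga] (@nil gen).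
  fin (cg_sym _ _ _ (cg_base _ _ _ rel2)) (@nil gen) (C q).
Qed.
Lemma L2a q : eqM (A q ++ [gc]) (gc :: A q).
Proof.
  induction q; simpl. apply cg_refl.
  st IHq [ga] (@nil gen).
  fin (cg_base _ _ _ rel3) (@nil gen) (A q).
Qed.
Lemma L2 p q : eqM (C p ++ A q) (A q ++ C p).
Proof.
  induction p; simpl. rewrite app_nil_r; apply cg_refl.
  st IHp [gc] (@nil gen).
  fin (cg_sym _ _ _ (L2a q)) (@nil gen) (C p).
Qed.
Lemma L3 r : eqM (C r ++ [gb;gb]) ([gb;gb] ++ A r).
Proof.
  induction r; simpl. apply cg_refl.
  st IHr [gc] (@nil gen).
  fin (cg_base _ _ _ rel1) (@nil gen) (A r).
Qed.

Definition canon (g : nat * vec) : word :=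
  let '(m,(x,y,z)) := g in
  match m with
  | 0 => C x ++ A y
  | S m' => B m' ++ C z ++ gb :: C x ++ A y
  end.
Definition inv (g : nat * vec) : Prop := let '(m,(x,y,z)) := g in m = 0 -> z = 0.

Lemma rep_snoc (t : gen) n : repeat t (S n) = repeat t n ++ [t].
Proof. rewrite (rep_comm t n []), app_nil_r. reflexivity. Qed.

Lemma eq_of_eq u v : u = v -> eqM u v.
Proof. intros ->; apply cg_refl. Qed.

Lemma step_a m x y z : eqM (canon (m,(x,y,z)) ++ [ga]) (canon (m,(x,S y,z))).
Proof. destruct m; unfold canon; rewrite (rep_snoc _ y) || rewrite (rep_snoc _ x); apply eq_of_eq; lsolve. Qed.

Lemma step_c m x y z : eqM (canon (m,(x,y,z)) ++ [gc]) (canon (m,(S x,y,z))).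
Proof.
  destruct m; unfold canon; rewrite (rep_snoc _ y) || rewrite (rep_snoc _ x).
  - fin (L2a y) (C x) (@nil gen).
  - fin (L2a y) (B m ++ C z ++ gb :: C x) (@nil gen).
Qed.

Lemma step_b m x y z : inv (m,(x,y,z)) -> eqM (canon (m,(x,y,z)) ++ [gb]) (canon (S m,(y,z,x))).
Proof.
  intro Hi. destruct m; simpl canon.
  - simpl in Hi; rewrite Hi by reflexivity. fin (L1 y) (C x) (@nil gen).
  - st (L1 y) (B m ++ C z ++ gb :: C x) (@nil gen).
    st (cg_sym _ _ _ (L1 x)) (B m ++ C z) (gb :: C y).
    st (L2 z x) (B m) (gb :: gb :: C y).
    st (L3 z) (B m ++ A x) (C y).
    st (cg_sym _ _ _ (L2 y z)) (B m ++ A x ++ [gb;gb]) (@nil gen).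
    st (L1 x) (B m) (gb :: C y ++ A z).
    apply eq_of_eq. simpl. rewrite rep_comm. lsolve.
Qed.

Lemma nf u : inv (phi u) /\ eqM u (canon (phi u)).
Proof.
  induction u using rev_ind.
  - split. simpl; auto. apply cg_refl.
  - destruct IHu as [Hi He].
    rewrite phi_app. replace (mul (phi u) (phi [x])) with (mul (phi u) (gphi x))
      by (cbn [phi]; rewrite mul_e_r; reflexivity).
    destruct (phi u) as [m [[a b] c]] eqn:E.
    assert (H1 : eqM (u ++ [x]) (canon (m,(a,b,c)) ++ [x])).
    { apply cg_mul; [exact He | apply cg_refl]. }
    destruct x; simpl mul; simpl sh; simpl vadd.
    + rewrite !Nat.add_0_r, Nat.add_1_r. split. simpl in *; auto.
      eapply eq_trans; [exact H1| apply step_a].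
    + rewrite !Nat.add_0_r, Nat.add_1_r. split. simpl; lia.
      eapply eq_trans; [exact H1| apply step_b; auto].
    + rewrite !Nat.add_0_r, Nat.add_1_r. split. simpl in *; auto.
      eapply eq_trans; [exact H1| apply step_c].
Qed.

Theorem theorem4 : forall A X Y B : word,
  eqM (A ++ X ++ B) (A ++ Y ++ B) -> eqM X Y.
Proof.
  intros A0 X Y B0 H. apply phi_inv in H. rewrite !phi_app in H.
  apply mul_cancel_l, mul_cancel_r in H.
  destruct (nf X) as [_ HX]. destruct (nf Y) as [_ HY].
  rewrite H in HX. eapply eq_trans; [exact HX | apply cg_sym; exact HY].
Qed.
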